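(* Let $n\ge 2$ and $1\le r\le n-1$ be integers. For every integer $m\ge 1$ define on $[-1,1]$ \[ \mathcal{T}_m(x)=\frac{\sqrt{1-x^2}\,T_m'(x)}{m^2}, \] where $T_m(x)=\cos(m\cos^{-1}x)$ is the Chebyshev polynomial of the first kind of degree $m$. For a sign vector $\varepsilon=(\varepsilon_1,\dots,\varepsilon_r)\in\{-1,+1\}^r$ put $m_0=n$, $m_i=m_{i-1}+\varepsilon_i$ for $1\le i\le r$, and \[ \beta_{n,r}(\varepsilon)=\prod_{i=1}^{r}2m_{i-1}. \] Enumerate the $2^r$ sign vectors as $\varepsilon^{(1)},\dots,\varepsilon^{(2^r)}$ in lexicographic order with $-1<+1$ (with $\varepsilon_1$ the most significant entry), and write $\beta^j_{n,r}=\beta_{n,r}(\varepsilon^{(j)})$. Then for all $x\in(-1,1)$, \[ \mathcal{T}_n(x)=\frac{d^r}{dx^r}\left(\sum_{j=1}^{2^r}\Big(\prod_{i=1}^r\varepsilon^{(j)}_i\Big)\frac{\mathcal{T}_{\,n+\varepsilon^{(j)}_1+\cdots+\varepsilon^{(j)}_r}(x)}{\beta^j_{n,r}}\right), \] i.e. $\mathcal{T}_n=\Big(\frac{(-1)^r\mathcal{T}_{n-r}}{\beta^1_{n,r}}+\frac{(-1)^{r-1}\mathcal{T}_{n-r+2}}{\beta^2_{n,r}}+\cdots-\frac{\mathcal{T}_{n+r-2}}{\beta^{2^r-1}_{n,r}}+\frac{\mathcal{T}_{n+r}}{\beta^{2^r}_{n,r}}\Big)^{(r)}$. Moreover \[ \beta^1_{n,r}=\beta^2_{n,r}=\prod_{i=1}^{r}(2n-2i+2),\qquad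 \beta^{2^r-1}_{n,r}=\beta^{2^r}_{n,r}=\prod_{i=1}^{r}(2n+2i-2), \] and for every $1\le j\le 2^{r-1}$, \[ \beta^1_{n,r}=\beta^2_{n,r}\le \beta^{2j-1}_{n,r}=\beta^{2j}_{n,r}\le\beta^{2^r-1}_{n,r}=\beta^{2^r}_{n,r}. \]
   Context: $T_m(x)=\cos(m\cos^{-1}x)$ denotes the Chebyshev polynomial of the first kind; $\mathcal{T}_m$ is the scaled quantity defined in the claim. The superscript $(r)$ denotes the $r$-th derivative with respect to $x$. *)

(* Defs.v *)
From Stdlib Require Import Reals Lra Lia ZArith List.
From Coquelicot Require Import Coquelicot.
Open Scope R_scope.

Definition chebT (m : nat) (x : R) : R := cos (INR m * acos x).

Definition calT (m : nat) (x : R) : R :=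
  sqrt (1 - x ^ 2) * Derive (chebT m) x / (INR m) ^ 2.

Definition sumR (a len : nat) (f : nat -> R) : R :=
  fold_right Rplus 0 (map f (seq a len)).
Definition prodR (a len : nat) (f : nat -> R) : R :=
  fold_right Rmult 1 (map f (seq a len)).

(* The j-th sign vector (1 <= j <= 2^r) in lexicographic order with -1 < +1,
   eps_1 most significant: its i-th entry (1 <= i <= r) is +1 iff bit (r-i)
   of the binary expansion of j-1 is set. *)
Definition eps (r j i : nat) : Z :=
  if Nat.testbit (j - 1) (r - i) then 1%Z else (-1)%Z.

Definition mseq (n r j i : nat) : Z :=
  (Z.of_nat n + fold_right Z.add 0%Z (map (eps r j) (seq 1 i)))%Z.

Definition beta (n r j : nat) : R :=
  prodR 1 r (fun i => 2 * IZR (mseq n r j (i - 1))).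

Definition sgnprod (r j : nat) : R :=
  prodR 1 r (fun i => IZR (eps r j i)).

Definition betaSum (n r : nat) (x : R) : R :=
  sumR 1 (2 ^ r) (fun j =>
    sgnprod r j * calT (Z.to_nat (mseq n r j r)) x / beta n r j).

(* Main.v *)
Require Import Defs.
From Stdlib Require Import Reals Lra Lia ZArith List.
From Coquelicot Require Import Coquelicot.
Open Scope R_scope.

Lemma sumR_cons a k f : sumR a (S k) f = f a + sumR (S a) k f.
Proof. reflexivity. Qed.
Lemma prodR_cons a k f : prodR a (S k) f = f a * prodR (S a) k f.
Proof. reflexivity. Qed.

Lemma prodR_last a k f : prodR a (S k) f = prodR a k f * f (a + k)%nat.
Proof.
  revert a; induction k; intros a.
  - unfold prodR; simpl. rewrite Nat.add_0_r; ring.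
  - rewrite prodR_cons, IHk, prodR_cons.
    replace (S a + k)%nat with (a + S k)%nat by lia. ring.
Qed.

Lemma prodR_ext a k f g : (forall i, (a <= i < a + k)%nat -> f i = g i) ->
  prodR a k f = prodR a k g.
Proof.
  revert a; induction k; intros a H; [reflexivity|].
  rewrite !prodR_cons, (H a) by lia. f_equal. apply IHk. intros; apply H; lia.
Qed.

Lemma sumR_ext a k f g : (forall i, (a <= i < a + k)%nat -> f i = g i) ->
  sumR a k f = sumR a k g.
Proof.
  revert a; induction k; intros a H; [reflexivity|].
  rewrite !sumR_cons, (H a) by lia. f_equal. apply IHk. intros; apply H; lia.
Qed.

Lemma prodR_nonneg a k f : (forall i, (a <= i < a + k)%nat -> 0 <= f i) ->
  0 <= prodR a k f.
Proof.
  revert a; induction k; intros a H; [unfold prodR; simpl; lra|].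
  rewrite prodR_cons. apply Rmult_le_pos; [apply H; lia|]. apply IHk; intros; apply H; lia.
Qed.

Lemma prodR_le a k f g : (forall i, (a <= i < a + k)%nat -> 0 <= f i <= g i) ->
  prodR a k f <= prodR a k g.
Proof.
  revert a; induction k; intros a H; [unfold prodR; simpl; lra|].
  rewrite !prodR_cons. apply Rmult_le_compat.
  - apply H; lia.
  - apply prodR_nonneg; intros; apply H; lia.
  - apply H; lia.
  - apply IHk; intros; apply H; lia.
Qed.

Lemma sumR_pairs N a f :
  sumR (2 * a + 1) (2 * N) f = sumR (a + 1) N (fun j => f (2 * j - 1)%nat + f (2 * j)%nat).
Proof.
  revert a; induction N; intros a; [reflexivity|].
  replace (2 * S N)%nat with (S (S (2 * N))) by lia.
  rewrite !sumR_cons. 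
  replace (S (S (2 * a + 1))) with (2 * (a+1) + 1)%nat by lia.
  replace (S (a + 1)) with ((a + 1) + 1)%nat by lia.
  rewrite IHN.
  replace (2 * (a + 1) - 1)%nat with (2 * a + 1)%nat by lia.
  replace (2 * (a + 1))%nat with (S (2 * a + 1)) by lia. ring.
Qed.

Lemma fold_Zadd_app l x : fold_right Z.add 0%Z (l ++ x :: nil) = (fold_right Z.add 0%Z l + x)%Z.
Proof. induction l; simpl; lia. Qed.

Lemma mseq_S n r j i : mseq n r j (S i) = (mseq n r j i + eps r j (S i))%Z.
Proof.
  unfold mseq. rewrite seq_S, map_app. simpl map at 2.
  rewrite fold_Zadd_app. replace (1 + i)%nat with (S i) by lia. lia.
Qed.

Lemma mseq_0 n r j : mseq n r j 0 = Z.of_nat n.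
Proof. unfold mseq; simpl; lia. Qed.

Lemma eps_cases r j i : eps r j i = 1%Z \/ eps r j i = (-1)%Z.
Proof. unfold eps; destruct Nat.testbit; auto. Qed.

Lemma mseq_bound n r j i :
  (Z.of_nat n - Z.of_nat i <= mseq n r j i <= Z.of_nat n + Z.of_nat i)%Z.
Proof.
  induction i. - rewrite mseq_0; lia.
  - rewrite mseq_S. destruct (eps_cases r j (S i)) as [E|E]; rewrite E; lia.
Qed.

Lemma mseq_boundR n r j i :
  INR n - INR i <= IZR (mseq n r j i) <= INR n + INR i.
Proof.
  destruct (mseq_bound n r j i) as [H1 H2]. apply IZR_le in H1, H2.
  rewrite minus_IZR, <- !INR_IZR_INZ in H1. rewrite plus_IZR, <- !INR_IZR_INZ in H2.
  lra.
Qed.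

Lemma mseq_ext n r j r' j' i :
  (forall l, (1 <= l <= i)%nat -> eps r j l = eps r' j' l) ->
  mseq n r j i = mseq n r' j' i.
Proof.
  induction i; intros H. - rewrite !mseq_0; auto.
  - rewrite !mseq_S, IHi, (H (S i)); [reflexivity|lia|intros; apply H; lia].
Qed.

Lemma mseq_const n r j i e :
  (forall l, (1 <= l <= i)%nat -> eps r j l = e) ->
  mseq n r j i = (Z.of_nat n + Z.of_nat i * e)%Z.
Proof.
  induction i; intros H. - rewrite mseq_0; lia.
  - rewrite mseq_S, IHi, (H (S i)); [lia|lia|intros; apply H; lia].
Qed.

Lemma eps_low k j j' b l : (j - 1 = 2 * (j' - 1) + Nat.b2n b)%nat ->
  (1 <= l <= k)%nat -> eps (S k) j l = eps k j' l.
Proof.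
  intros Hj Hl. unfold eps. rewrite Hj.
  replace (S k - l)%nat with (S (k - l)) by lia. now rewrite Nat.testbit_succ_r.
Qed.

Lemma eps_top k j j' b : (j - 1 = 2 * (j' - 1) + Nat.b2n b)%nat ->
  eps (S k) j (S k) = if b then 1%Z else (-1)%Z.
Proof.
  intros Hj. unfold eps. rewrite Hj, Nat.sub_diag, Nat.testbit_0_r. reflexivity.
Qed.

Section Rec.
Variables (n k j j' : nat) (b : bool).
Hypothesis Hj : (j - 1 = 2 * (j' - 1) + Nat.b2n b)%nat.

Lemma mseq_low i : (i <= k)%nat -> mseq n (S k) j i = mseq n k j' i.
Proof. intros Hi. apply mseq_ext. intros l Hl. apply (eps_low k j j' b); auto; lia. Qed.

Lemma mseq_top : mseq n (S k) j (S k) = (mseq n k j' k + if b then 1 else -1)%Z.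
Proof. rewrite mseq_S, mseq_low by lia. now rewrite (eps_top k j j' b). Qed.

Lemma sgnprod_rec : sgnprod (S k) j = sgnprod k j' * IZR (if b then 1 else -1)%Z.
Proof.
  unfold sgnprod. rewrite prodR_last. replace (1 + k)%nat with (S k) by lia.
  rewrite (eps_top k j j' b) by auto. f_equal.
  apply prodR_ext. intros i Hi. rewrite (eps_low k j j' b); auto. lia.
Qed.

Lemma beta_rec : beta n (S k) j = beta n k j' * (2 * IZR (mseq n k j' k)).
Proof.
  unfold beta. rewrite prodR_last. replace (1 + k - 1)%nat with k by lia.
  rewrite mseq_low by lia. f_equal.
  apply prodR_ext. intros i Hi. rewrite mseq_low by lia. reflexivity.
Qed.
End Rec.

Definition W (n k : nat) (g : Z -> R -> R) (x : R) : R :=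
  sumR 1 (2 ^ k) (fun j => sgnprod k j * g (mseq n k j k) x / beta n k j).

Definition Phi (g : Z -> R -> R) (M : Z) (x : R) : R :=
  (g (M + 1)%Z x - g (M - 1)%Z x) / (2 * IZR M).

Lemma W_rec n k g x : W n (S k) g x = W n k (Phi g) x.
Proof.
  unfold W. rewrite Nat.pow_succ_r'.
  change 1%nat with (2 * 0 + 1)%nat at 1. rewrite sumR_pairs.
  apply sumR_ext. intros j' Hj'.
  assert (H1 : ((2 * j' - 1) - 1 = 2 * (j' - 1) + Nat.b2n false)%nat) by (simpl; lia).
  assert (H2 : ((2 * j') - 1 = 2 * (j' - 1) + Nat.b2n true)%nat) by (simpl; lia).
  rewrite (sgnprod_rec _ _ _ _ H1), (sgnprod_rec _ _ _ _ H2),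
    (beta_rec _ _ _ _ _ H1), (beta_rec _ _ _ _ _ H2),
    (mseq_top _ _ _ _ _ H1), (mseq_top _ _ _ _ _ H2).
  unfold Phi. replace (mseq n k j' k + -1)%Z with (mseq n k j' k - 1)%Z by lia.
  unfold Rdiv. rewrite !Rinv_mult. simpl IZR. ring.
Qed.

Lemma loc_int x : -1 < x < 1 -> locally x (fun t => -1 < t < 1).
Proof.
  intros Hx. apply (open_and (fun t => -1 < t) (fun t => t < 1)).
  apply open_gt. apply open_lt. exact Hx.
Qed.

Lemma sq_pos y : -1 < y < 1 -> 0 < sqrt (1 - y ^ 2).
Proof. intros H. apply sqrt_lt_R0. nra. Qed.

Lemma sin_acos' y : -1 < y < 1 -> sin (acos y) = sqrt (1 - y ^ 2).
Proof. intros H. rewrite sin_acos by lra. unfold Rsqr. f_equal. ring. Qed.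

Lemma acos_der y : -1 < y < 1 -> is_derive acos y (-1 / sqrt (1 - y ^ 2)).
Proof.
  intros H. apply is_derive_Reals.
  apply (derive_pt_eq_1 _ _ _ (derivable_pt_acos y H)).
  rewrite derive_pt_acos. unfold Rsqr. do 3 f_equal. ring.
Qed.

Lemma der_eq (f : R -> R) x l l' : is_derive f x l -> l = l' -> is_derive f x l'.
Proof. intros H E; subst; auto. Qed.

Ltac fixeq := match goal with |- ?a = ?b => change (@eq R a b) end.

Lemma scalR (a b : R) : scal a b = a * b.
Proof. reflexivity. Qed.

Lemma chebT_der p y : -1 < y < 1 ->
  is_derive (chebT p) y (INR p * sin (INR p * acos y) / sqrt (1 - y ^ 2)).
Proof.
  intros H. unfold chebT.
  eapply der_eq.
  { apply (is_derive_comp cos (fun t => INR p * acos t)).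
    - apply is_derive_Reals. apply derivable_pt_lim_cos.
    - apply is_derive_scal. apply acos_der; auto. }
  rewrite scalR. change (@eq R (INR p * (-1 / sqrt (1 - y ^ 2)) * - sin (INR p * acos y)) (INR p * sin (INR p * acos y) / sqrt (1 - y ^ 2))). field. apply Rgt_not_eq, sq_pos; auto.
Qed.

Lemma calT_eq p y : (1 <= p)%nat -> -1 < y < 1 ->
  calT p y = sin (INR p * acos y) / INR p.
Proof.
  intros Hp H. unfold calT. rewrite (is_derive_unique _ _ _ (chebT_der p y H)).
  assert (0 < INR p) by (apply lt_0_INR; lia).
  field. repeat split; try lra; apply Rgt_not_eq, sq_pos; auto.
Qed.

Definition sf (p : nat) (y : R) := sin (INR p * acos y) / INR p.

Lemma sf_der p y : (1 <= p)%nat -> -1 < y < 1 ->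
  is_derive (sf p) y (- cos (INR p * acos y) / sqrt (1 - y ^ 2)).
Proof.
  intros Hp H. unfold sf.
  assert (0 < INR p) by (apply lt_0_INR; lia).
  eapply der_eq.
  { apply (is_derive_ext (fun t => / INR p * sin (INR p * acos t))).
    intros t; fixeq; unfold Rdiv; ring.
    apply is_derive_scal.
    apply (is_derive_comp sin (fun t => INR p * acos t)).
    - apply is_derive_Reals. apply derivable_pt_lim_sin.
    - apply is_derive_scal. apply acos_der; auto. }
  unfold scal; simpl; unfold mult; simpl. fixeq. field. repeat split; try lra; apply Rgt_not_eq, sq_pos; auto.
Qed.

Definition cT (M : Z) (x : R) : R := calT (Z.to_nat M) x.

Lemma minusR (a b : R) : minus a b = a - b.
Proof. reflexivity. Qed.

Lemma Phi_der M y : (2 <= M)%Z -> -1 < y < 1 ->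
  is_derive (Phi cT M) y (cT M y).
Proof.
  intros HM H.
  assert (Hp : (2 <= Z.to_nat M)%nat) by lia.
  assert (E : IZR M = INR (Z.to_nat M)) by (rewrite INR_IZR_INZ, Z2Nat.id by lia; auto).
  assert (E1 : Z.to_nat (M + 1) = S (Z.to_nat M)) by lia.
  assert (E2 : Z.to_nat (M - 1) = (Z.to_nat M - 1)%nat) by lia.
  unfold cT. remember (Z.to_nat M) as p eqn:Ep.
  apply (is_derive_ext_loc (fun t => (sf (S p) t - sf (p - 1) t) / (2 * INR p))).
  { generalize (loc_int y H). apply filter_imp. intros t Ht.
    unfold Phi, cT. rewrite E1, E2, E, !calT_eq by (auto; lia). reflexivity. }
  assert (0 < INR p) by (apply lt_0_INR; lia).
  assert (D1 := sf_der (S p) y ltac:(lia) H).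
  assert (D2 := sf_der (p - 1) y ltac:(lia) H).
  assert (D3 := is_derive_minus _ _ _ _ _ D1 D2).
  assert (D4 := is_derive_scal _ _ (/ (2 * INR p)) _ D3).
  eapply der_eq.
  { eapply is_derive_ext; [|exact D4]. intros t. simpl. rewrite minusR.
    fixeq. unfold Rdiv. apply Rmult_comm. }
  fixeq. rewrite calT_eq by (auto; lia).
  rewrite !minusR.
  rewrite S_INR, minus_INR by lia. change (INR 1) with 1.
  replace ((INR p + 1) * acos y) with (INR p * acos y + acos y) by ring.
  replace ((INR p - 1) * acos y) with (INR p * acos y - acos y) by ring.
  rewrite cos_plus, cos_minus, sin_acos' by auto.
  assert (0 < sqrt (1 - y^2)) by (apply sq_pos; auto).
  field. lra.
Qed.

Lemma plusR (a b : R) : plus a b = a + b.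
Proof. reflexivity. Qed.

Lemma W_der n k g g' y :
  (forall j, is_derive (g (mseq n k j k)) y (g' (mseq n k j k) y)) ->
  is_derive (W n k g) y (W n k g' y).
Proof.
  intros Hd. unfold W, sumR. generalize (seq 1 (2 ^ k)). intros l.
  induction l as [|j l IH].
  - simpl. assert (D := is_derive_const (K := R_AbsRing) 0 y).
    eapply der_eq; [exact D|reflexivity].
  - assert (D := is_derive_scal _ _ (sgnprod k j / beta n k j) _ (Hd j)).
    assert (D2 := is_derive_plus _ _ _ _ _ D IH).
    eapply der_eq.
    { eapply is_derive_ext; [|exact D2]. intros t. simpl. rewrite plusR.
      fixeq. unfold Rdiv. ring. }
    simpl. rewrite plusR. fixeq. unfold Rdiv. ring.
Qed.

Lemma main_deriv n : forall k, (k + 1 <= n)%nat -> forall x, -1 < x < 1 ->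
  Derive_n (betaSum n k) k x = calT n x.
Proof.
  induction k; intros Hk x Hx.
  - simpl. unfold betaSum, sumR. simpl. unfold sgnprod, beta, prodR, mseq. simpl.
    rewrite Z.add_0_r, Nat2Z.id. field.
  - rewrite <- IHk by (lia || auto).
    rewrite <- Nat.add_1_r, <- Derive_n_comp.
    apply Derive_n_ext_loc.
    generalize (loc_int x Hx). apply filter_imp. intros t Ht.
    simpl. rewrite Nat.add_1_r.
    assert (Ew : forall u, betaSum n (S k) u = W n k (Phi cT) u).
    { intros u. rewrite <- W_rec. reflexivity. }
    rewrite (Derive_ext _ _ _ Ew).
    apply is_derive_unique.
    change (betaSum n k t) with (W n k cT t).
    apply W_der. intros j. apply Phi_der; auto.
    destruct (mseq_bound n k j k). lia.
Qed.

Lemma beta_pair n r j j' a b b' :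
  (j - 1 = 2 * a + Nat.b2n b)%nat -> (j' - 1 = 2 * a + Nat.b2n b')%nat ->
  beta n r j = beta n r j'.
Proof.
  intros Hj Hj'. unfold beta. apply prodR_ext. intros i Hi. f_equal. f_equal.
  apply mseq_ext. intros l Hl. unfold eps. rewrite Hj, Hj'.
  replace (r - l)%nat with (S (r - l - 1)) by lia. now rewrite !Nat.testbit_succ_r.
Qed.

Lemma IZR_lin n i e : (1 <= i)%nat ->
  IZR (Z.of_nat n + Z.of_nat (i - 1) * e) = INR n + (INR i - 1) * IZR e.
Proof.
  intros Hi. rewrite plus_IZR, mult_IZR, <- !INR_IZR_INZ, minus_INR by lia.
  reflexivity.
Qed.

Lemma beta_low n r : beta n r 2 = prodR 1 r (fun i => 2 * INR n - 2 * INR i + 2).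
Proof.
  unfold beta. apply prodR_ext. intros i Hi.
  rewrite (mseq_const n r 2 (i - 1) (-1)).
  - rewrite IZR_lin by lia. simpl IZR. ring.
  - intros l Hl. unfold eps. replace (2 - 1)%nat with (2 * 0 + Nat.b2n true)%nat by reflexivity.
    replace (r - l)%nat with (S (r - l - 1)) by lia. rewrite Nat.testbit_succ_r.
    now rewrite Nat.bits_0.
Qed.

Lemma beta_high n r : beta n r (2 ^ r) = prodR 1 r (fun i => 2 * INR n + 2 * INR i - 2).
Proof.
  unfold beta. apply prodR_ext. intros i Hi.
  rewrite (mseq_const n r (2 ^ r) (i - 1) 1).
  - rewrite IZR_lin by lia. simpl IZR. ring.
  - intros l Hl. unfold eps. replace (2 ^ r - 1)%nat with (Nat.ones r)
      by (rewrite Nat.ones_equiv; lia).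
    rewrite Nat.ones_spec_low by lia. reflexivity.
Qed.

Lemma beta_pair2 n r j : (1 <= j)%nat -> beta n r (2 * j - 1) = beta n r (2 * j).
Proof.
  intros Hj. apply (beta_pair n r _ _ (j - 1) false true); simpl; lia.
Qed.

Lemma beta_ge n r j : (r + 1 <= n)%nat -> beta n r 2 <= beta n r j.
Proof.
  intros Hr. rewrite beta_low. unfold beta. apply prodR_le. intros i Hi.
  destruct (mseq_boundR n r j (i - 1)) as [H1 _].
  rewrite minus_INR in H1 by lia. change (INR 1) with 1 in H1.
  assert (INR i + 1 <= INR n) by (rewrite <- S_INR; apply le_INR; lia).
  lra.
Qed.

Lemma beta_le n r j : (r + 1 <= n)%nat -> beta n r j <= beta n r (2 ^ r).
Proof.
  intros Hr. rewrite beta_high. unfold beta. apply prodR_le. intros i Hi.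
  destruct (mseq_boundR n r j (i - 1)) as [H1 H2].
  rewrite minus_INR in H1, H2 by lia. change (INR 1) with 1 in H1, H2.
  assert (INR i + 1 <= INR n) by (rewrite <- S_INR; apply le_INR; lia).
  lra.
Qed.

Theorem lemma1 (n r : nat) (hn : (2 <= n)%nat) (hr1 : (1 <= r)%nat)
  (hr2 : (r <= n - 1)%nat) :
  (forall x : R, -1 < x < 1 -> calT n x = Derive_n (betaSum n r) r x) /\
  (beta n r 1 = beta n r 2 /\
   beta n r 2 = prodR 1 r (fun i => 2 * INR n - 2 * INR i + 2)) /\
  (beta n r (2 ^ r - 1) = beta n r (2 ^ r) /\
   beta n r (2 ^ r) = prodR 1 r (fun i => 2 * INR n + 2 * INR i - 2)) /\
  (forall j : nat, (1 <= j <= 2 ^ (r - 1))%nat ->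
     beta n r 1 = beta n r 2 /\
     beta n r 2 <= beta n r (2 * j - 1) /\
     beta n r (2 * j - 1) = beta n r (2 * j) /\
     beta n r (2 * j) <= beta n r (2 ^ r - 1) /\
     beta n r (2 ^ r - 1) = beta n r (2 ^ r)).
Proof.
  assert (B12 : beta n r 1 = beta n r 2) by (apply (beta_pair2 n r 1); lia).
  assert (Hq : (1 <= 2 ^ (r - 1))%nat).
  { assert (2 ^ (r - 1) <> 0)%nat by (apply Nat.pow_nonzero; lia). lia. }
  assert (E : (2 ^ r = 2 * 2 ^ (r - 1))%nat).
  { replace r with (S (r - 1)) at 1 by lia. apply Nat.pow_succ_r'. }
  assert (BT : beta n r (2 ^ r - 1) = beta n r (2 ^ r)).
  { rewrite E. apply beta_pair2; auto. }
  split; [|split; [|split]].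
  - intros x Hx. symmetry. apply main_deriv; auto. lia.
  - split; auto. apply beta_low.
  - split; auto. apply beta_high.
  - intros j Hj. repeat split; auto.
    + apply beta_ge; lia.
    + apply beta_pair2; lia.
    + rewrite BT. apply beta_le; lia.
Qed.
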